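(* Let $\Gamma\curvearrowright X$ be an extreme boundary action, and let $U,V\subseteq X$ be non-empty open sets neither of which is dense in $X$. Then the normal closures of $\Gamma_U$ and $\Gamma_V$ in $\Gamma$ coincide and are equal to $\operatorname{int}(\Gamma\curvearrowright X)$. Moreover, $\Gamma_U$ is amenable if and only if $\Gamma_V$ is amenable, and $\Gamma_U$ is trivial if and only if $\Gamma_V$ is trivial.
   Context: An action of a discrete group $\Gamma$ by homeomorphisms on a compact Hausdorff space $X$ with more than two points is an extreme boundary action if for every closed $K\subsetneq X$ and every non-empty open $U\subseteq X$ there is $g\in\Gamma$ with $gK\subseteq U$. $\Gamma_U=\{g\in\Gamma: gx=x\ \forall x\in U\}$; $\Gamma_x^\circ$ is the subgroup of elements fixing pointwise a neighbourhood of $x$; $\operatorname{int}(\Gamma\curvearrowright X)=\langle\Gamma_x^\circ: x\in X\rangle$. *)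

(* Defs.v *)
From Stdlib Require Import Reals.
Open Scope R_scope.

Record Group := {
  gcar :> Type;
  gmul : gcar -> gcar -> gcar;
  ginv : gcar -> gcar;
  gone : gcar;
  gmul_assoc : forall a b c, gmul a (gmul b c) = gmul (gmul a b) c;
  gmul_1l : forall a, gmul gone a = a;
  gmul_1r : forall a, gmul a gone = a;
  gmul_Vl : forall a, gmul (ginv a) a = gone;
  gmul_Vr : forall a, gmul a (ginv a) = gone
}.

Definition is_subgroup (G : Group) (H : G -> Prop) : Prop :=
  H (gone G) /\
  (forall a b, H a -> H b -> H (gmul G a b)) /\
  (forall a, H a -> H (ginv G a)).

Definition is_normal_subgroup (G : Group) (H : G -> Prop) : Prop :=
  is_subgroup G H /\
  (forall g h, H h -> H (gmul G (gmul G g h) (ginv G g))).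

Definition generated_subgroup (G : Group) (S : G -> Prop) : G -> Prop :=
  fun g => forall H, is_subgroup G H -> (forall s, S s -> H s) -> H g.

Definition normal_closure (G : Group) (S : G -> Prop) : G -> Prop :=
  fun g => forall H, is_normal_subgroup G H -> (forall s, S s -> H s) -> H g.

Definition same_set {T : Type} (A B : T -> Prop) : Prop := forall x, A x <-> B x.

(** Amenability of a subgroup H of a discrete group G (viewed as a discrete
    group in its own right): existence of a left-invariant finitely additive
    probability mean defined on all subsets of H. *)
Definition amenable_subgroup (G : Group) (H : G -> Prop) : Prop :=
  exists m : (G -> Prop) -> R,
    (forall A, (forall x, A x -> H x) -> 0 <= m A) /\
    m H = 1 /\
    (forall A B, (forall x, A x -> H x) -> (forall x, B x -> H x) ->
       (forall x, A x -> B x -> False) ->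
       m (fun x => A x \/ B x) = m A + m B) /\
    (forall h A, H h -> (forall x, A x -> H x) ->
       m (fun x => A (gmul G (ginv G h) x)) = m A).

Definition trivial_subgroup (G : Group) (H : G -> Prop) : Prop :=
  forall g, H g -> g = gone G.

Record TopSpace := {
  tcar :> Type;
  is_open : (tcar -> Prop) -> Prop;
  open_full : is_open (fun _ => True);
  open_inter : forall U V, is_open U -> is_open V -> is_open (fun x => U x /\ V x);
  open_union : forall (I : Type) (F : I -> tcar -> Prop),
      (forall i, is_open (F i)) -> is_open (fun x => exists i, F i x)
}.

Definition is_closed (X : TopSpace) (K : X -> Prop) : Prop :=
  is_open X (fun x => ~ K x).

Definition compact_space (X : TopSpace) : Prop :=
  forall (I : Type) (F : I -> X -> Prop),
    (forall i, is_open X (F i)) -> (forall x, exists i, F i x) ->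
    exists l : list I, forall x, exists i, List.In i l /\ F i x.

Definition hausdorff (X : TopSpace) : Prop :=
  forall x y : X, x <> y ->
    exists U V, is_open X U /\ is_open X V /\ U x /\ V y /\
                (forall z, U z -> V z -> False).

Definition continuous (X : TopSpace) (f : X -> X) : Prop :=
  forall U, is_open X U -> is_open X (fun x => U (f x)).

Definition dense (X : TopSpace) (U : X -> Prop) : Prop :=
  forall W, is_open X W -> (exists x, W x) -> exists x, W x /\ U x.

Definition action_by_homeos (G : Group) (X : TopSpace) (act : G -> X -> X) : Prop :=
  (forall x, act (gone G) x = x) /\
  (forall g h x, act (gmul G g h) x = act g (act h x)) /\
  (forall g, continuous X (act g)).

Definition extreme_boundary_action (G : Group) (X : TopSpace) (act : G -> X -> X) : Prop :=
  action_by_homeos G X act /\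
  compact_space X /\ hausdorff X /\
  (exists x y z : X, x <> y /\ y <> z /\ x <> z) /\
  (forall K U, is_closed X K -> (exists x, ~ K x) ->
     is_open X U -> (exists x, U x) ->
     exists g, forall k, K k -> U (act g k)).

Definition rigid_stab (G : Group) (X : TopSpace) (act : G -> X -> X) (U : X -> Prop) : G -> Prop :=
  fun g => forall x, U x -> act g x = x.

Definition germ_stab (G : Group) (X : TopSpace) (act : G -> X -> X) (x : X) : G -> Prop :=
  fun g => exists W, is_open X W /\ W x /\ (forall y, W y -> act g y = y).

Definition int_action (G : Group) (X : TopSpace) (act : G -> X -> X) : G -> Prop :=
  generated_subgroup G (fun g => exists x, germ_stab G X act x g).

(* Main.v *)
Require Import Defs.
From Stdlib Require Import Reals.
From Stdlib Require Import Classical ClassicalEpsilon FunctionalExtensionality PropExtensionality.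

Local Notation "a ⋅ b" := (gmul _ a b) (at level 40, left associativity).
Local Notation "a ⁻¹" := (ginv _ a) (at level 3, format "a ⁻¹").

Lemma mulKl (G : Group) (a b : G) : a⁻¹ ⋅ (a ⋅ b) = b.
Proof. rewrite gmul_assoc, gmul_Vl, gmul_1l; reflexivity. Qed.
Lemma mulKr (G : Group) (a b : G) : a ⋅ (a⁻¹ ⋅ b) = b.
Proof. rewrite gmul_assoc, gmul_Vr, gmul_1l; reflexivity. Qed.
Lemma mulKl' (G : Group) (a b : G) : (b ⋅ a) ⋅ a⁻¹ = b.
Proof. rewrite <- gmul_assoc, gmul_Vr, gmul_1r; reflexivity. Qed.
Lemma mulKr' (G : Group) (a b : G) : (b ⋅ a⁻¹) ⋅ a = b.
Proof. rewrite <- gmul_assoc, gmul_Vl, gmul_1r; reflexivity. Qed.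
Lemma cancel_l (G : Group) (a b c : G) : a ⋅ b = a ⋅ c -> b = c.
Proof. intro H. rewrite <- (mulKl G a b), <- (mulKl G a c), H; reflexivity. Qed.
Lemma cancel_r (G : Group) (a b c : G) : a ⋅ c = b ⋅ c -> a = b.
Proof. intro H. rewrite <- (mulKl' G c a), <- (mulKl' G c b), H; reflexivity. Qed.
Lemma inv_uniq (G : Group) (a b : G) : a ⋅ b = gone G -> a = b⁻¹.
Proof. intro H. apply (cancel_r G _ _ b). rewrite H, gmul_Vl; reflexivity. Qed.
Lemma inv_mul (G : Group) (a b : G) : (a ⋅ b)⁻¹ = b⁻¹ ⋅ a⁻¹.
Proof. symmetry; apply inv_uniq. rewrite gmul_assoc, <- (gmul_assoc G (b⁻¹)), gmul_Vl, gmul_1r, gmul_Vl; reflexivity. Qed.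
Lemma inv_inv (G : Group) (a : G) : a⁻¹⁻¹ = a.
Proof. symmetry; apply inv_uniq. apply gmul_Vr. Qed.
Lemma mul_mid (G : Group) (a b c : G) : (a ⋅ b⁻¹) ⋅ (b ⋅ c) = a ⋅ c.
Proof. rewrite <- gmul_assoc, mulKl; reflexivity. Qed.

Lemma act_inv_l (G : Group) (X : TopSpace) (act : G -> X -> X) : action_by_homeos G X act ->
  forall g y, act (g⁻¹) (act g y) = y.
Proof. intros [H1 [H2 _]] g y. rewrite <- H2, gmul_Vl, H1; reflexivity. Qed.
Lemma act_inv_r (G : Group) (X : TopSpace) (act : G -> X -> X) : action_by_homeos G X act ->
  forall g y, act g (act (g⁻¹) y) = y.
Proof. intros [H1 [H2 _]] g y. rewrite <- H2, gmul_Vr, H1; reflexivity. Qed.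

Lemma rigid_subgroup (G : Group) (X : TopSpace) (act : G -> X -> X) U : action_by_homeos G X act ->
  is_subgroup G (rigid_stab G X act U).
Proof.
  intros Ha. pose proof Ha as [H1 [H2 _]]. unfold rigid_stab. split; [|split].
  - intros x _; apply H1.
  - intros a b Ha' Hb x Ux. rewrite H2, Hb, Ha'; auto.
  - intros a Ha' x Ux. rewrite <- (Ha' x Ux) at 1. apply act_inv_l; auto.
Qed.

Lemma move_into (G : Group) (X : TopSpace) (act : G -> X -> X) U W :
  (forall K U, is_closed X K -> (exists x, ~ K x) ->
     is_open X U -> (exists x, U x) ->
     exists g, forall k, K k -> U (act g k)) ->
  ~ dense X U -> is_open X W -> (exists x, W x) ->
  exists g, forall y, U y -> W (act g y).
Proof.
  intros Hext Hnd HW HWne.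
  destruct (classic (exists O, is_open X O /\ (exists x, O x) /\ forall x, O x -> ~ U x))
    as [[O [HO [HOne HOU]]] | Hn].
  - destruct (Hext (fun x => ~ O x) W) as [g Hg]; auto.
    + unfold is_closed.
      replace (fun x => ~ ~ O x) with O; auto.
      apply functional_extensionality; intro x; apply propositional_extensionality.
      split; [tauto | apply NNPP].
    + destruct HOne as [x Hx]; exists x; tauto.
    + exists g; intros y Uy; apply Hg; intro Oy; exact (HOU y Oy Uy).
  - exfalso; apply Hnd. intros O HO HOne. apply NNPP; intro Hc. apply Hn.
    exists O; split; auto; split; auto. intros x Ox Ux; apply Hc; exists x; auto.
Qed.

Lemma conj_into (G : Group) (X : TopSpace) (act : G -> X -> X) U W g h :
  action_by_homeos G X act ->
  (forall y, U y -> W (act g y)) -> rigid_stab G X act W h ->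
  rigid_stab G X act U (g⁻¹ ⋅ h ⋅ g).
Proof.
  intros Ha Hg Hh y Uy. pose proof Ha as [_ [H2 _]].
  rewrite !H2, (Hh _ (Hg y Uy)). apply act_inv_l; auto.
Qed.

Lemma conj_back (G : Group) (g h : G) : g ⋅ (g⁻¹ ⋅ h ⋅ g) ⋅ g⁻¹ = h.
Proof. rewrite !gmul_assoc, mulKl', gmul_Vr, gmul_1l; reflexivity. Qed.

Lemma gen_subgroup (G : Group) S : is_subgroup G (generated_subgroup G S).
Proof.
  unfold generated_subgroup; split; [|split].
  - intros H [HH _] _; apply HH.
  - intros a b Ha Hb H HH HS. apply (proj1 (proj2 HH)); [apply Ha|apply Hb]; auto.
  - intros a Ha H HH HS. apply (proj2 (proj2 HH)); apply Ha; auto.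
Qed.

Lemma int_normal (G : Group) (X : TopSpace) (act : G -> X -> X) : action_by_homeos G X act ->
  is_normal_subgroup G (int_action G X act).
Proof.
  intros Ha. pose proof Ha as [H1 [H2 H3]]. split; [apply gen_subgroup|].
  intros g h Hh. unfold int_action in *.
  set (S := fun g0 => exists x, germ_stab G X act x g0) in *.
  set (H' := fun y => generated_subgroup G S (g ⋅ y ⋅ g⁻¹)).
  apply (Hh H').
  - unfold H'; split; [|split].
    + rewrite gmul_1r, gmul_Vr. apply gen_subgroup.
    + intros a b Ha' Hb'.
      replace (g ⋅ (a ⋅ b) ⋅ g⁻¹) with ((g ⋅ a ⋅ g⁻¹) ⋅ (g ⋅ b ⋅ g⁻¹)).
      * apply gen_subgroup; auto.
      * rewrite !gmul_assoc, mulKr'; reflexivity.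
    + intros a Ha'.
      replace (g ⋅ a⁻¹ ⋅ g⁻¹) with ((g ⋅ a ⋅ g⁻¹)⁻¹).
      * apply gen_subgroup; auto.
      * rewrite !inv_mul, inv_inv, !gmul_assoc; reflexivity.
  - intros s [x [W [HW [Wx Hfix]]]]. unfold H'. intros N HN HS. apply HS.
    exists (act g x). exists (fun y => W (act (g⁻¹) y)). split; [|split].
    + apply H3; auto.
    + rewrite act_inv_l; auto.
    + intros y Wy. rewrite !H2, (Hfix _ Wy). apply act_inv_r; auto.
Qed.

Lemma amen_transfer (G : Group) (H H2 : G -> Prop) (phi : G -> G) :
  is_subgroup G H -> is_subgroup G H2 ->
  (forall a b, phi (a ⋅ b) = phi a ⋅ phi b) -> (forall a b, phi a = phi b -> a = b) ->
  (forall a, H2 a -> H (phi a)) -> amenable_subgroup G H -> amenable_subgroup G H2.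
Proof.
  intros [HH1 [HHm HHi]] [H21 [H2m H2i]] phim phiinj phiH [m [mnn [m1 [madd minv]]]].
  assert (phi1 : phi (gone G) = gone G).
  { apply (cancel_l G (phi (gone G))). rewrite <- phim, !gmul_1r; reflexivity. }
  assert (phiV : forall a, phi (a⁻¹) = (phi a)⁻¹).
  { intro a; apply inv_uniq. rewrite <- phim, gmul_Vl; auto. }
  set (K := fun x => exists a, H2 a /\ phi a = x).
  assert (K1 : K (gone G)) by (exists (gone G); auto).
  assert (Km : forall x y, K x -> K y -> K (x ⋅ y)).
  { intros x y [a [Ha <-]] [b [Hb <-]]. exists (a ⋅ b); split; auto. }
  assert (Ki : forall x, K x -> K (x⁻¹)).
  { intros x [a [Ha <-]]. exists (a⁻¹); split; auto. }
  assert (KH : forall x, K x -> H x) by (intros x [a [Ha <-]]; auto).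
  set (P := fun x y => H y /\ K (x ⋅ y⁻¹)).
  set (r := fun x => epsilon (inhabits (gone G)) (P x)).
  assert (r_spec : forall x, H x -> P x (r x)).
  { intros x Hx. apply epsilon_spec. exists x. split; auto.
    rewrite gmul_Vr; auto. }
  assert (P_eq : forall x y, K (x ⋅ y⁻¹) -> r x = r y).
  { intros x y Kxy. unfold r. f_equal. apply functional_extensionality; intro z.
    apply propositional_extensionality. unfold P. split; intros [Hz Kz]; split; auto.
    - replace (y ⋅ z⁻¹) with ((x ⋅ y⁻¹)⁻¹ ⋅ (x ⋅ z⁻¹)); auto.
      rewrite inv_mul, inv_inv. apply mul_mid.
    - rewrite <- (mul_mid G x y). auto. }
  set (T := fun t => H t /\ r t = t).
  exists (fun A => m (fun x => exists a t, A a /\ T t /\ x = phi a ⋅ t)).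
  assert (sub : forall A, (forall x, A x -> H2 x) -> forall x,
     (exists a t, A a /\ T t /\ x = phi a ⋅ t) -> H x).
  { intros A HA x [a [t [Aa [[Ht _] ->]]]]. apply HHm; auto. }
  split; [|split; [|split]].
  - intros A HA. apply mnn. apply sub; auto.
  - rewrite <- m1. f_equal. apply functional_extensionality; intro x.
    apply propositional_extensionality. split.
    + apply sub; auto.
    + intro Hx. destruct (r_spec x Hx) as [Hr [a [Ha Ea]]].
      exists a, (r x). split; auto. split.
      * split; auto. apply P_eq. exists (a⁻¹); split; auto.
        rewrite phiV, Ea, inv_mul, inv_inv; reflexivity.
      * rewrite Ea, mulKr'; reflexivity.
  - intros A B HA HB Hdis.
    rewrite <- madd.
    + f_equal. apply functional_extensionality; intro x.
      apply propositional_extensionality. split.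
      * intros [a [t [[Aa|Ba] [Tt Ex]]]]; [left|right]; exists a, t; auto.
      * intros [[a [t [Aa [Tt Ex]]]]|[a [t [Aa [Tt Ex]]]]]; exists a, t; auto.
    + apply sub; auto.
    + apply sub; auto.
    + intros x [a [t [Aa [[Ht Rt] Ex]]]] [b [t' [Bb [[Ht' Rt'] Ex']]]].
      assert (Htt : t = t').
      { rewrite <- Rt, <- Rt'. apply P_eq.
        replace (t ⋅ t'⁻¹) with (phi (a⁻¹ ⋅ b)).
        - exists (a⁻¹ ⋅ b); split; auto.
        - rewrite phim, phiV. apply (cancel_r G _ _ t'). rewrite mulKr'.
          apply (cancel_l G (phi a)). rewrite <- gmul_assoc, mulKr, <- Ex, <- Ex'; reflexivity. }
      subst t'. assert (a = b) as <-.
      { apply phiinj. apply (cancel_r G _ _ t). rewrite <- Ex, <- Ex'; reflexivity. }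
      exact (Hdis a Aa Bb).
  - intros h A Hh HA.
    rewrite <- (minv (phi h) (fun x => exists a t, A a /\ T t /\ x = phi a ⋅ t)); auto.
    + f_equal. apply functional_extensionality; intro x.
      apply propositional_extensionality. split.
      * intros [a [t [Aa [Tt Ex]]]]. exists (h⁻¹ ⋅ a), t. split; auto. split; auto.
        rewrite Ex, phim, phiV, gmul_assoc; reflexivity.
      * intros [a [t [Aa [Tt Ex]]]]. exists (h ⋅ a), t. split.
        -- rewrite mulKl; auto.
        -- split; auto. rewrite phim, <- gmul_assoc, <- Ex, mulKr; reflexivity.
    + apply sub; auto.
Qed.

Theorem mainTheorem6 (G : Group) (X : TopSpace) (act : G -> X -> X)
  (U V : X -> Prop) :
  extreme_boundary_action G X act ->
  is_open X U -> (exists x, U x) -> ~ dense X U ->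
  is_open X V -> (exists x, V x) -> ~ dense X V ->
  same_set (normal_closure G (rigid_stab G X act U))
           (normal_closure G (rigid_stab G X act V)) /\
  same_set (normal_closure G (rigid_stab G X act U)) (int_action G X act) /\
  (amenable_subgroup G (rigid_stab G X act U) <->
   amenable_subgroup G (rigid_stab G X act V)) /\
  (trivial_subgroup G (rigid_stab G X act U) <->
   trivial_subgroup G (rigid_stab G X act V)).
Proof.
  intros [Ha [_ [_ [_ Hext]]]] HU HUne HUd HV HVne HVd.
  assert (NCint : forall W, is_open X W -> (exists x, W x) -> ~ dense X W ->
            same_set (normal_closure G (rigid_stab G X act W)) (int_action G X act)).
  { intros W HW [w Ww] HWd y. split.
    - intro Hy. apply Hy; [apply int_normal; auto|].
      intros s Hs H HH HS. apply HS. exists w, W. auto.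
    - intros Hy N [HN HNn] Hsub. apply Hy; auto.
      intros s [x [O [HO [Ox Hfix]]]].
      destruct (move_into G X act W O Hext HWd HO (ex_intro _ x Ox)) as [g Hg].
      rewrite <- (conj_back G g s). apply HNn, Hsub.
      eapply conj_into; eauto. }
  pose proof (NCint U HU HUne HUd) as EU.
  pose proof (NCint V HV HVne HVd) as EV.
  split; [intro y; specialize (EU y); specialize (EV y); tauto|]. split; auto.
  assert (AT : forall A B, ~ dense X A -> is_open X B -> (exists x, B x) ->
     (amenable_subgroup G (rigid_stab G X act A) -> amenable_subgroup G (rigid_stab G X act B))
     /\ (trivial_subgroup G (rigid_stab G X act A) -> trivial_subgroup G (rigid_stab G X act B))).
  { intros A B HAd HB HBne.
    destruct (move_into G X act A B Hext HAd HB HBne) as [g Hg]. split.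
    - apply (amen_transfer G _ _ (fun x => g⁻¹ ⋅ x ⋅ g)).
      + apply rigid_subgroup; auto.
      + apply rigid_subgroup; auto.
      + intros a b. rewrite !gmul_assoc, mulKl'; reflexivity.
      + intros a b E. apply (cancel_r G _ _ g) in E. apply cancel_l in E; auto.
      + intros a Hb. eapply conj_into; eauto.
    - intros Htr h Hh. rewrite <- (conj_back G g h), (Htr _ (conj_into G X act A B g h Ha Hg Hh)).
      rewrite gmul_1r, gmul_Vr; reflexivity. }
  destruct (AT U V HUd HV HVne), (AT V U HVd HU HUne). tauto.
Qed.
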